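(* Let $M$ be a recursively enumerable language over a finite alphabet $\Sigma$ which does not contain the empty word. Then for each of the calculi $\mathcal{M}'^{-,\mathrm{mult}}_{2018}$ and $\mathcal{F}^{-,\mathrm{mult}}_{2018}$ there exists a grammar based on that calculus which generates $M$, both in the sense of s-recognition and in the sense of t-recognition.
   Context: Formulae are built from a countable set of variables by $\backslash,/,\cdot$ and the unary $\langle\rangle$, $[]^{-1}$, $!$ (no $\mathbf1$, no $\wedge,\vee$). $\mathcal{M}'^{-,\mathrm{mult}}_{2018}$ (with stoups): a stoup is a finite multiset of formulae ($\varnothing$ empty); a tree term is a formula or $[\Xi]$ with $\Xi$ a meta-formula; a meta-formula is $\zeta;\Gamma$ ($\zeta$ a stoup, $\Gamma$ a finite sequence of tree terms, empty $\Lambda$), $\varnothing;\Gamma$ written $\Gamma$; comma is concatenation / multiset union; sequents $\Xi\to C$; $\Xi(\Theta)$ designates an occurrence of a meta-formula $\Theta$ which is $\Xi$ itself or the content of a bracket $[\Theta]$ at any depth. Rules: axiom $A\to A$; ($/L$) from $\zeta_1;\Gamma\to B$ and $\Xi(\zeta_2;\Delta_1,C,\Delta_2)\to D$ infer $\Xi(\zeta_1,\zeta_2;\Delta_1,C/B,\Gamma,\Delta_2)\to D$; ($/R$) from $\zeta;\Gamma,B\to C$ infer $\zeta;\Gamma\to C/B$, only if $\Gamma\ne\Lambda$ or $\zeta\ne\varnothing$; ($\backslash L$) from $\zeta_1;\Gamma\to A$ and $\Xi(\zeta_2;\Delta_1,C,\Delta_2)\to D$ infer $\Xi(\zeta_1,\zeta_2;\Delta_1,\Gamma,A\backslash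 C,\Delta_2)\to D$; ($\backslash R$) from $\zeta;A,\Gamma\to C$ infer $\zeta;\Gamma\to A\backslash C$, only if $\Gamma\neq\Lambda$ or $\zeta\neq\varnothing$; ($\cdot L$) from $\Xi(\zeta;\Delta_1,A,B,\Delta_2)\to D$ infer $\Xi(\zeta;\Delta_1,A\cdot B,\Delta_2)\to D$; ($\cdot R$) from $\zeta_1;\Delta\to A$, $\zeta_2;\Gamma\to B$ infer $\zeta_1,\zeta_2;\Delta,\Gamma\to A\cdot B$; ($[]^{-1}L$) from $\Xi(\zeta;\Delta_1,A,\Delta_2)\to B$ infer $\Xi(\zeta;\Delta_1,[[]^{-1}A],\Delta_2)\to B$; ($[]^{-1}R$) from $[\Xi]\to A$ infer $\Xi\to[]^{-1}A$; ($\langle\rangle L$) from $\Xi(\zeta;\Delta_1,[A],\Delta_2)\to B$ infer $\Xi(\zeta;\Delta_1,\langle\rangle A,\Delta_2)\to B$; ($\langle\rangle R$) from $\Xi\to A$ infer $[\Xi]\to\langle\rangle A$; ($!L$) from $\Xi(\zeta,A;\Gamma_1,\Gamma_2)\to B$ infer $\Xi(\zeta;\Gamma_1,!A,\Gamma_2)\to B$; ($!P$) from $\Xi(\zeta;\Gamma_1,A,\Gamma_2)\to B$ infer $\Xi(\zeta,A;\Gamma_1,\Gamma_2)\to B$; ($!R'$) from $A;\Lambda\to B$ infer $A;\Lambda\to!B$; ($!C'$) from $\Xi(\zeta,A;\Gamma_1,[\zeta',A;\Gamma_2],\Gamma_3)\to B$ infer $\Xi(\zeta,A;\Gamma_1,[[\zeta';\Gamma_2]],\Gamma_3)\to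 B$, only if $\Gamma_2\ne\Lambda$ or $\zeta'\ne\varnothing$. Cut is not a rule. $\mathcal{F}^{-,\mathrm{mult}}_{2018}$ (stoup-free): meta-formulae are finite sequences of tree terms; rules: axiom $A\to A$; the stoup-free versions of $/L$, $/R$ (only if $\Gamma\ne\Lambda$), $\backslash L$, $\backslash R$ (only if $\Gamma\ne\Lambda$), $\cdot L$, $\cdot R$, $[]^{-1}L$, $[]^{-1}R$, $\langle\rangle L$, $\langle\rangle R$ (drop all stoups); ($!L$) from $\Xi(\Delta_1,A,\Delta_2)\to C$ infer $\Xi(\Delta_1,!A,\Delta_2)\to C$; ($!P_1$) from $\Xi(\Delta_1,!A,\Phi,\Delta_2)\to C$ infer $\Xi(\Delta_1,\Phi,!A,\Delta_2)\to C$; ($!P_2$) the converse; ($!R$) from $!A\to B$ infer $!A\to!B$; ($!C$) from $\Xi(!A,\Gamma_1,[!A,\Gamma_2],\Gamma_3)\to C$ infer $\Xi(!A,\Gamma_1,[[\Gamma_2]],\Gamma_3)\to C$, only if $\Gamma_2\neq\Lambda$; (cut) from $\Pi\to A$ and $\Xi(\Gamma_1,A,\Gamma_2)\to C$ infer $\Xi(\Gamma_1,\Pi,\Gamma_2)\to C$. Grammars: a grammar is a triple $\langle\Sigma,\rhd,H\rangle$ with $H$ a formula and $\rhd$ a finite relation between letters of $\Sigma$ and formulae. s-recognition accepts $a_1\dots a_n$ if $A_1,\dots,A_n\to H$ (no brackets, empty stoups) is derivable for some $A_i$ with $a_i\rhd A_i$; t-recognition accepts $a_1\dots a_n$ if $\Pi\to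 H$ is derivable for some meta-formula $\Pi$ with empty stoups which becomes $A_1,\dots,A_n$ after removing all brackets (not bracket modalities), for some $a_i\rhd A_i$. The grammar generates $M$ in a given sense if the set of words accepted in that sense equals $M$. *)

(* Defs.v *)
From HB Require Import structures.
From mathcomp Require Import all_boot.
From mathcomp Require Import finmap multiset.

Set Implicit Arguments.
Unset Strict Implicit.
Unset Printing Implicit Defensive.

Local Open Scope fset_scope.
Local Open Scope mset_scope.

Inductive formula : Type :=
| Var   of nat
| Under of formula & formula   (* Under A C  =  A \ C *)
| Over  of formula & formula   (* Over C B   =  C / B *)
| Prod  of formula & formula
| Diam  of formula
| BoxInv of formula
| Bang  of formula.

Fixpoint formula_enc (A : formula) : GenTree.tree nat :=
  match A with
  | Var n => GenTree.Leaf n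
  | Under A B => GenTree.Node 0 [:: formula_enc A; formula_enc B]
  | Over A B => GenTree.Node 1 [:: formula_enc A; formula_enc B]
  | Prod A B => GenTree.Node 2 [:: formula_enc A; formula_enc B]
  | Diam A => GenTree.Node 3 [:: formula_enc A]
  | BoxInv A => GenTree.Node 4 [:: formula_enc A]
  | Bang A => GenTree.Node 5 [:: formula_enc A]
  end.

Fixpoint formula_dec (t : GenTree.tree nat) : option formula :=
  match t with
  | GenTree.Leaf n => Some (Var n)
  | GenTree.Node 0 [:: a; b] =>
      obind (fun A => omap (Under A) (formula_dec b)) (formula_dec a)
  | GenTree.Node 1 [:: a; b] =>
      obind (fun A => omap (Over A) (formula_dec b)) (formula_dec a)
  | GenTree.Node 2 [:: a; b] =>
      obind (fun A => omap (Prod A) (formula_dec b)) (formula_dec a)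
  | GenTree.Node 3 [:: a] => omap Diam (formula_dec a)
  | GenTree.Node 4 [:: a] => omap BoxInv (formula_dec a)
  | GenTree.Node 5 [:: a] => omap Bang (formula_dec a)
  | _ => None
  end.

Lemma formula_encK : pcancel formula_enc formula_dec.
Proof. by elim=> //= [A -> B -> | A -> B -> | A -> B -> | A -> | A -> | A ->]. Qed.

HB.instance Definition _ := Countable.copy formula (pcan_type formula_encK).

Notation stoup := (multiset formula).

(* Tree terms: a formula, or a bracket [Xi] around a meta-formula       *)
(* Xi = (zeta ; Gamma), stored as its stoup and its sequence.           *)
Inductive sterm : Type :=
| SF of formula
| SB of stoup & seq sterm.

Definition smeta := (stoup * seq sterm)%type.

Definition SBr (X : smeta) : sterm := SB X.1 X.2.

Definition sform (A : formula) : smeta := (mset0, [:: SF A]).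

(* Contexts Xi( . ): the hole is either Xi itself or the content of a   *)
(* bracket at any depth.  SIn z G1 c G2  is  z ; G1, [c], G2.           *)
Inductive sctx : Type :=
| SHole
| SIn of stoup & seq sterm & sctx & seq sterm.

Fixpoint sfill (c : sctx) (T : smeta) : smeta :=
  match c with
  | SHole => T
  | SIn z G1 c' G2 => (z, G1 ++ SBr (sfill c' T) :: G2)
  end.

Inductive Mder : smeta -> formula -> Prop :=
| M_ax A : Mder (sform A) A
| M_OverL (X : sctx) z1 z2 G D1 D2 B C D :
    Mder (z1, G) B ->
    Mder (sfill X (z2, D1 ++ SF C :: D2)) D ->
    Mder (sfill X (z1 `+` z2, D1 ++ SF (Over C B) :: G ++ D2)) D
| M_OverR z G B C :
    G <> [::] \/ z <> mset0 ->
    Mder (z, G ++ [:: SF B]) C ->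
    Mder (z, G) (Over C B)
| M_UnderL (X : sctx) z1 z2 G D1 D2 A C D :
    Mder (z1, G) A ->
    Mder (sfill X (z2, D1 ++ SF C :: D2)) D ->
    Mder (sfill X (z1 `+` z2, D1 ++ G ++ SF (Under A C) :: D2)) D
| M_UnderR z G A C :
    G <> [::] \/ z <> mset0 ->
    Mder (z, SF A :: G) C ->
    Mder (z, G) (Under A C)
| M_ProdL (X : sctx) z D1 D2 A B D :
    Mder (sfill X (z, D1 ++ SF A :: SF B :: D2)) D ->
    Mder (sfill X (z, D1 ++ SF (Prod A B) :: D2)) D
| M_ProdR z1 z2 D G A B :
    Mder (z1, D) A -> Mder (z2, G) B ->
    Mder (z1 `+` z2, D ++ G) (Prod A B)
| M_BoxInvL (X : sctx) z D1 D2 A B :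
    Mder (sfill X (z, D1 ++ SF A :: D2)) B ->
    Mder (sfill X (z, D1 ++ SBr (sform (BoxInv A)) :: D2)) B
| M_BoxInvR (Xi : smeta) A :
    Mder (mset0, [:: SBr Xi]) A ->
    Mder Xi (BoxInv A)
| M_DiamL (X : sctx) z D1 D2 A B :
    Mder (sfill X (z, D1 ++ SBr (sform A) :: D2)) B ->
    Mder (sfill X (z, D1 ++ SF (Diam A) :: D2)) B
| M_DiamR (Xi : smeta) A :
    Mder Xi A ->
    Mder (mset0, [:: SBr Xi]) (Diam A)
| M_BangL (X : sctx) z G1 G2 A B :
    Mder (sfill X (z `+` [mset A], G1 ++ G2)) B ->
    Mder (sfill X (z, G1 ++ SF (Bang A) :: G2)) B
| M_BangP (X : sctx) z G1 G2 A B :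
    Mder (sfill X (z, G1 ++ SF A :: G2)) B ->
    Mder (sfill X (z `+` [mset A], G1 ++ G2)) B
| M_BangR' A B :
    Mder ([mset A], [::]) B ->
    Mder ([mset A], [::]) (Bang B)
| M_BangC' (X : sctx) z z' G1 G2 G3 A B :
    G2 <> [::] \/ z' <> mset0 ->
    Mder (sfill X (z `+` [mset A], G1 ++ SBr (z' `+` [mset A], G2) :: G3)) B ->
    Mder (sfill X (z `+` [mset A],
                   G1 ++ SBr (mset0, [:: SBr (z', G2)]) :: G3)) B.

Fixpoint sterm_empty (t : sterm) : bool :=
  match t with
  | SF _ => true
  | SB z G => (z == mset0) && all sterm_empty G
  end.
Definition smeta_empty (X : smeta) : bool :=
  (X.1 == mset0) && all sterm_empty X.2.

Fixpoint sterm_leaves (t : sterm) : seq formula :=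
  match t with
  | SF A => [:: A]
  | SB _ G => flatten (map sterm_leaves G)
  end.
Definition smeta_leaves (X : smeta) : seq formula :=
  flatten (map sterm_leaves X.2).


Inductive fterm : Type :=
| FF of formula
| FB of seq fterm.

Definition fmeta := seq fterm.

Inductive fctx : Type :=
| FHole
| FIn of seq fterm & fctx & seq fterm.   (* G1, [c], G2 *)

Fixpoint ffill (c : fctx) (T : fmeta) : fmeta :=
  match c with
  | FHole => T
  | FIn G1 c' G2 => G1 ++ FB (ffill c' T) :: G2
  end.

Inductive Fder : fmeta -> formula -> Prop :=
| F_ax A : Fder [:: FF A] A
| F_OverL (X : fctx) G D1 D2 B C D :
    Fder G B ->
    Fder (ffill X (D1 ++ FF C :: D2)) D ->
    Fder (ffill X (D1 ++ FF (Over C B) :: G ++ D2)) D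
| F_OverR G B C :
    G <> [::] ->
    Fder (G ++ [:: FF B]) C ->
    Fder G (Over C B)
| F_UnderL (X : fctx) G D1 D2 A C D :
    Fder G A ->
    Fder (ffill X (D1 ++ FF C :: D2)) D ->
    Fder (ffill X (D1 ++ G ++ FF (Under A C) :: D2)) D
| F_UnderR G A C :
    G <> [::] ->
    Fder (FF A :: G) C ->
    Fder G (Under A C)
| F_ProdL (X : fctx) D1 D2 A B D :
    Fder (ffill X (D1 ++ FF A :: FF B :: D2)) D ->
    Fder (ffill X (D1 ++ FF (Prod A B) :: D2)) D
| F_ProdR D G A B :
    Fder D A -> Fder G B -> Fder (D ++ G) (Prod A B)
| F_BoxInvL (X : fctx) D1 D2 A B :
    Fder (ffill X (D1 ++ FF A :: D2)) B ->
    Fder (ffill X (D1 ++ FB [:: FF (BoxInv A)] :: D2)) B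
| F_BoxInvR (Xi : fmeta) A :
    Fder [:: FB Xi] A -> Fder Xi (BoxInv A)
| F_DiamL (X : fctx) D1 D2 A B :
    Fder (ffill X (D1 ++ FB [:: FF A] :: D2)) B ->
    Fder (ffill X (D1 ++ FF (Diam A) :: D2)) B
| F_DiamR (Xi : fmeta) A :
    Fder Xi A -> Fder [:: FB Xi] (Diam A)
| F_BangL (X : fctx) D1 D2 A C :
    Fder (ffill X (D1 ++ FF A :: D2)) C ->
    Fder (ffill X (D1 ++ FF (Bang A) :: D2)) C
| F_BangP1 (X : fctx) D1 D2 Phi A C :
    Fder (ffill X (D1 ++ FF (Bang A) :: Phi ++ D2)) C ->
    Fder (ffill X (D1 ++ Phi ++ FF (Bang A) :: D2)) C
| F_BangP2 (X : fctx) D1 D2 Phi A C :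
    Fder (ffill X (D1 ++ Phi ++ FF (Bang A) :: D2)) C ->
    Fder (ffill X (D1 ++ FF (Bang A) :: Phi ++ D2)) C
| F_BangR A B :
    Fder [:: FF (Bang A)] B -> Fder [:: FF (Bang A)] (Bang B)
| F_BangC (X : fctx) G1 G2 G3 A C :
    G2 <> [::] ->
    Fder (ffill X (FF (Bang A) :: G1 ++ FB (FF (Bang A) :: G2) :: G3)) C ->
    Fder (ffill X (FF (Bang A) :: G1 ++ FB [:: FB G2] :: G3)) C
| F_cut (X : fctx) Pi G1 G2 A C :
    Fder Pi A ->
    Fder (ffill X (G1 ++ FF A :: G2)) C ->
    Fder (ffill X (G1 ++ Pi ++ G2)) C.

Fixpoint fterm_leaves (t : fterm) : seq formula :=
  match t with
  | FF A => [:: A]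
  | FB G => flatten (map fterm_leaves G)
  end.
Definition fmeta_leaves (X : fmeta) : seq formula :=
  flatten (map fterm_leaves X).

(* A grammar <Sigma, |>, H>: the finite relation |> is given by the      *)
(* finite list of its pairs (a, A), meaning a |> A.                      *)
Record grammar (Sigma : finType) := Grammar {
  lex : seq (Sigma * formula);
  target : formula
}.

Definition assigns (Sigma : finType) (G : grammar Sigma)
    (w : seq Sigma) (As : seq formula) : Prop :=
  size As = size w /\ all (fun p => p \in lex G) (zip w As).

Definition s_rec_M (Sigma : finType) (G : grammar Sigma) (w : seq Sigma) : Prop :=
  exists As, assigns G w As /\ Mder (mset0, map SF As) (target G).

Definition t_rec_M (Sigma : finType) (G : grammar Sigma) (w : seq Sigma) : Prop :=
  exists As (Pi : smeta), assigns G w As /\ smeta_empty Pi /\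
    smeta_leaves Pi = As /\ Mder Pi (target G).

Definition s_rec_F (Sigma : finType) (G : grammar Sigma) (w : seq Sigma) : Prop :=
  exists As, assigns G w As /\ Fder (map FF As) (target G).

Definition t_rec_F (Sigma : finType) (G : grammar Sigma) (w : seq Sigma) : Prop :=
  exists As (Pi : fmeta), assigns G w As /\
    fmeta_leaves Pi = As /\ Fder Pi (target G).

(* configuration: state, tape left of the head (nearest cell first),     *)
(* tape from the head rightwards; missing cells are blank.               *)
Section TM.
Variables (Q Gam : finType) (blank : Gam)
          (delta : Q -> Gam -> option (Q * Gam * bool)).
  (* delta q a = Some (q', b, right?) : write b, go to q', move right if *)
  (* the boolean is true and left otherwise; None = halt.               *)

Definition tm_config := (Q * seq Gam * seq Gam)%type.

Definition tm_step (c : tm_config) : option tm_config :=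
  let: (q, l, r) := c in
  let a := head blank r in
  let r' := behead r in
  match delta q a with
  | None => None
  | Some (q', b, true) => Some (q', b :: l, r')
  | Some (q', b, false) => Some (q', behead l, head blank l :: b :: r')
  end.

Fixpoint tm_run (n : nat) (c : tm_config) : option tm_config :=
  match n with
  | 0 => Some c
  | n'.+1 => obind (tm_run n') (tm_step c)
  end.
End TM.

Definition recursively_enumerable (Sigma : finType) (M : seq Sigma -> Prop) : Prop :=
  exists (Q Gam : finType) (blank : Gam) (inp : Sigma -> Gam)
         (delta : Q -> Gam -> option (Q * Gam * bool)) (q0 qacc : Q),
    injective inp /\ (forall a, inp a != blank) /\
    forall w : seq Sigma,
      M w <-> exists n l r,
        tm_run blank delta n (q0, [::], map inp w) = Some (qacc, l, r).

(* Main.v *)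
From HB Require Import structures.
From mathcomp Require Import all_boot.
From mathcomp Require Import finmap multiset.
Require Import Defs.

Set Implicit Arguments.
Unset Strict Implicit.
Unset Printing Implicit Defensive.

Local Open Scope fset_scope.
Local Open Scope mset_scope.



Section Sem.
Variable rs : seq (seq nat * seq nat).

Inductive red : seq nat -> seq nat -> Prop :=
| red_refl t : red t t
| red_step u l r v t : (l, r) \in rs -> red (u ++ r ++ v) t -> red (u ++ l ++ v) t.

Lemma red_trans a b c : red a b -> red b c -> red a c.
Proof.
elim=> // u l r v t Hin _ IH Hc; apply: red_step Hin (IH Hc).
Qed.

Lemma red_ctx a b t t' : red t t' -> red (a ++ t ++ b) (a ++ t' ++ b).
Proof.
elim=> [t0|u l r v t0 Hin _ IH]; first exact: red_refl.
have E1 : a ++ (u ++ l ++ v) ++ b = (a ++ u) ++ l ++ (v ++ b) by rewrite !catA.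
have E2 : a ++ (u ++ r ++ v) ++ b = (a ++ u) ++ r ++ (v ++ b) by rewrite !catA.
rewrite E1; apply: red_step Hin _; by rewrite -E2.
Qed.

Lemma red_cat a a' b b' : red a a' -> red b b' -> red (a ++ b) (a' ++ b').
Proof.
move=> H1 H2; apply: (@red_trans _ (a' ++ b)).
  by have := red_ctx [::] b H1; rewrite /= .
by have := red_ctx a' [::] H2; rewrite !cats0.
Qed.

Definition Ecode := 3.

Fixpoint sem (A : formula) : seq nat -> Prop :=
  match A with
  | Var n => fun t => red t (if n == Ecode then [::] else [:: n])
  | Under A C => fun y => forall x, sem A x -> sem C (x ++ y)
  | Over C B => fun y => forall x, sem B x -> sem C (y ++ x)
  | Prod A B => fun t => exists a b, sem A a /\ sem B b /\ red t (a ++ b)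
  | Diam A => sem A
  | BoxInv A => sem A
  | Bang A => fun t => sem A [::] /\ red t [::]
  end.

Lemma sem_down A t t' : red t t' -> sem A t' -> sem A t.
Proof.
elim: A t t' => [n|A IHA C IHC|C IHC B IHB|A IHA B IHB|A IHA|A IHA|A IHA] t t' Hr /=.
- by move=> H; apply: red_trans Hr H.
- move=> H x Hx; apply: IHC (H x Hx).
  by have := red_ctx x [::] Hr; rewrite !cats0.
- move=> H x Hx; apply: IHC (H x Hx).
  by have := red_ctx [::] x Hr.
- by case=> a [b [Ha [Hb H]]]; exists a, b; split => //; split => //; apply: red_trans Hr H.
- exact: IHA.
- exact: IHA.
- by case=> H1 H2; split => //; apply: red_trans Hr H2.
Qed.

End Sem.



Section FSound.
Variable rs : seq (seq nat * seq nat).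
Local Notation red := (red rs).
Local Notation sem := (sem rs).

Fixpoint seqsem (T : Type) (f : T -> seq nat -> Prop) (G : seq T) : seq nat -> Prop :=
  match G with
  | [::] => fun t => t = [::]
  | i :: G' => fun t => exists a b, t = a ++ b /\ f i a /\ seqsem f G' b
  end.

Fixpoint fsem (x : fterm) : seq nat -> Prop :=
  match x with
  | FF A => sem A
  | FB G => seqsem fsem G
  end.

Notation fseq := (seqsem fsem).

Lemma seqsem_cat T f (G1 G2 : seq T) t :
  seqsem f (G1 ++ G2) t <-> exists a b, t = a ++ b /\ seqsem f G1 a /\ seqsem f G2 b.
Proof.
elim: G1 t => [|i G1 IH] t /=.
  split; first by move=> H; exists [::], t.
  by case=> a [b [-> [-> H]]].
split.
  case=> a [b [-> [Ha /IH [c [d [-> [Hc Hd]]]]]]].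
  exists (a ++ c), d; rewrite catA; split => //; split => //.
  by exists a, c.
case=> a [b [-> [[c [d [-> [Hc Hd]]]] Hb]]].
exists c, (d ++ b); rewrite catA; split => //; split => //.
by apply/IH; exists d, b.
Qed.

Definition fsub (G G' : fmeta) :=
  forall t, fseq G t -> exists t', red t t' /\ fseq G' t'.

Definition fvalid (G : fmeta) (C : formula) := forall t, fseq G t -> sem C t.

Lemma fsub_refl G : fsub G G.
Proof. by move=> t H; exists t; split => //; apply: red_refl. Qed.

Lemma fsub_cat G1 G2 G1' G2' : fsub G1 G1' -> fsub G2 G2' -> fsub (G1 ++ G2) (G1' ++ G2').
Proof.
move=> H1 H2 t /seqsem_cat [a [b [-> [/H1 [a' [Ha Ha']] /H2 [b' [Hb Hb']]]]]].
exists (a' ++ b'); split; first exact: red_cat.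
by apply/seqsem_cat; exists a', b'.
Qed.

Lemma fsub_mid D1 D2 T T' : fsub T T' -> fsub (D1 ++ T ++ D2) (D1 ++ T' ++ D2).
Proof. by move=> H; apply: fsub_cat; [apply: fsub_refl|apply: fsub_cat => //; apply: fsub_refl]. Qed.

Lemma fsub_ctx X T T' : fsub T T' -> fsub (ffill X T) (ffill X T').
Proof.
move=> H; elim: X => //= G1 c IH G2.
have -> : G1 ++ FB (ffill c T) :: G2 = G1 ++ [:: FB (ffill c T)] ++ G2 by [].
have -> : G1 ++ FB (ffill c T') :: G2 = G1 ++ [:: FB (ffill c T')] ++ G2 by [].
apply: fsub_mid => t /= [a [b [-> [/IH [a' [Ha Ha']] ->]]]].
by exists a'; split; [rewrite !cats0|exists a', [::]; rewrite cats0].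
Qed.

Lemma fvalid_sub G G' C : fvalid G' C -> fsub G G' -> fvalid G C.
Proof. by move=> HV HS t /HS [t' [Hr /HV]]; apply: sem_down. Qed.

Lemma fvalid_ctx X D1 D2 T T' C :
  fvalid (ffill X (D1 ++ T' ++ D2)) C -> fsub T T' -> fvalid (ffill X (D1 ++ T ++ D2)) C.
Proof. by move=> HV HS; apply: fvalid_sub HV _; apply: fsub_ctx; apply: fsub_mid. Qed.

Lemma fseq1 A t : fseq [:: FF A] t <-> sem A t.
Proof.
split; first by case=> a [b [-> [Ha ->]]]; rewrite cats0.
by move=> H; exists t, [::]; rewrite cats0.
Qed.

Lemma Fsound G C : Fder G C -> fvalid G C.
Proof.
elim=> {G C}.
- by move=> A t /fseq1.
-
  move=> X G D1 D2 B C D _ HG _ HV.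
  change (fvalid (ffill X (D1 ++ (FF (Over C B) :: G) ++ D2)) D).
  apply: (fvalid_ctx (T' := [:: FF C])); first exact: HV.
  move=> t [f [b [-> [Hf /HG Hb]]]].
  exists (f ++ b); split; first by rewrite ?cats0; apply: red_refl.
  by apply/fseq1; apply: Hf.
-
  move=> G B C _ _ HV t Ht x Hx; apply: HV.
  by apply/seqsem_cat; exists t, x; split => //; split => //; apply/fseq1.
-
  move=> X G D1 D2 A C D _ HG _ HV.
  have -> : D1 ++ G ++ FF (Under A C) :: D2 = D1 ++ (G ++ [:: FF (Under A C)]) ++ D2 by rewrite -catA.
  apply: (fvalid_ctx (T' := [:: FF C])); first exact: HV.
  move=> t /seqsem_cat [a [b [-> [/HG Ha [f [e [-> [Hf ->]]]]]]]].
  exists (a ++ f); split; first by rewrite ?cats0; apply: red_refl.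
  by apply/fseq1; apply: Hf.
-
  move=> G A C _ _ HV t Ht x Hx; apply: HV.
  by exists x, t; split => //; split.
-
  move=> X D1 D2 A B D _ HV.
  rewrite -cat1s.
  apply: (fvalid_ctx (T' := [:: FF A; FF B])); first by [].
  move=> t /fseq1 [a [b [Ha [Hb Hr]]]].
  exists (a ++ b); split => //.
  by exists a, b; split => //; split => //; apply/fseq1.
-
  move=> D G A B _ HD _ HG t /seqsem_cat [a [b [-> [/HD Ha /HG Hb]]]].
  by exists a, b; split => //; split => //; apply: red_refl.
-
  move=> X D1 D2 A B _ HV.
  rewrite -cat1s.
  apply: (fvalid_ctx (T' := [:: FF A])); first by rewrite cat1s.
  move=> t [a [b [-> [/fseq1 Ha ->]]]].
  by exists a; rewrite cats0; split; [apply: red_refl|apply/fseq1].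
-
  move=> Xi A _ HV t Ht; apply: HV.
  by exists t, [::]; rewrite cats0.
-
  move=> X D1 D2 A B _ HV.
  rewrite -cat1s.
  apply: (fvalid_ctx (T' := [:: FB [:: FF A]])); first by rewrite cat1s.
  move=> t /fseq1 Ht; exists t; split; first exact: red_refl.
  by exists t, [::]; rewrite cats0; split => //; split => //; apply/fseq1.
-
  move=> Xi A _ HV t [a [b [-> [Ha ->]]]]; rewrite cats0; exact: HV.
-
  move=> X D1 D2 A C _ HV.
  rewrite -cat1s.
  apply: (fvalid_ctx (T' := [:: FF A])); first by rewrite cat1s.
  move=> t /fseq1 [H0 Hr]; exists t; split; first exact: red_refl.
  by apply/fseq1; apply: sem_down Hr H0.
-
  move=> X D1 D2 Phi A C _ HV.
  have -> : D1 ++ Phi ++ FF (Bang A) :: D2 = D1 ++ (Phi ++ [:: FF (Bang A)]) ++ D2 by rewrite -catA.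
  apply: (fvalid_ctx (T' := [:: FF (Bang A)] ++ Phi)); first by exact: HV.
  move=> t /seqsem_cat [a [b [-> [Ha /fseq1 [H0 Hr]]]]].
  exists a; split; first by have := red_ctx a [::] Hr; rewrite !cats0.
  by apply/seqsem_cat; exists [::], a; split => //; split => //; apply/fseq1; split => //; apply: red_refl.
-
  move=> X D1 D2 Phi A C _ HV.
  apply: (@fvalid_ctx X D1 D2 ([:: FF (Bang A)] ++ Phi) (Phi ++ [:: FF (Bang A)])); first by rewrite -catA.
  move=> t /seqsem_cat [a [b [-> [/fseq1 [H0 Hr] Hb]]]].
  exists b; split; first by have := red_ctx [::] b Hr.
  by apply/seqsem_cat; exists b, [::]; rewrite cats0; split => //; split => //; apply/fseq1; split => //; apply: red_refl.
-
  move=> A B _ HV t /fseq1 [H0 Hr]; split => //.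
  by apply: HV; apply/fseq1; split => //; apply: red_refl.
-
  move=> X G1 G2 G3 A C _ _ HV.
  apply: (fvalid_sub HV); apply: fsub_ctx.
  move=> t [a [b [-> [[H0 Hr] /seqsem_cat [c [d [-> [Hc [e [f [-> [He Hf]]]]]]]]]]]].
  exists (a ++ c ++ e ++ f); split; first exact: red_refl.
  exists a, (c ++ e ++ f); split => //; split => //.
  apply/seqsem_cat; exists c, (e ++ f); split => //; split => //.
  exists e, f; split => //; split => //.
  case: He => e1 [e2 [-> [He1 ->]]]; rewrite cats0.
  by exists [::], e1; split => //; split => //; split => //; apply: red_refl.
-
  move=> X Pi G1 G2 A C _ HP _ HV.
  apply: (fvalid_ctx (T' := [:: FF A])); first by [].
  move=> t Ht; exists t; split; first exact: red_refl.
  by apply/fseq1; apply: HP.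
Qed.

End FSound.



Section MSound.
Variable rs : seq (seq nat * seq nat).
Local Notation red := (red rs).
Local Notation sem := (sem rs).

Definition stoupok (z : stoup) := forall A, A \in z -> sem A [::].

Fixpoint ssem (x : sterm) : seq nat -> Prop :=
  match x with
  | SF A => sem A
  | SB z G => fun t => stoupok z /\ seqsem ssem G t
  end.

Notation sseq := (seqsem ssem).

Definition msem (X : smeta) t := stoupok X.1 /\ sseq X.2 t.

Definition msub (X X' : smeta) :=
  forall t, msem X t -> exists t', red t t' /\ msem X' t'.

Definition mvalid (X : smeta) (C : formula) := forall t, msem X t -> sem C t.

Lemma mvalid_sub X X' C : mvalid X' C -> msub X X' -> mvalid X C.
Proof. by move=> HV HS t /HS [t' [Hr /HV]]; apply: sem_down. Qed.

Lemma msub_ctx c T T' : msub T T' -> msub (sfill c T) (sfill c T').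
Proof.
move=> H; elim: c => //= z G1 c IH G2 t [Hz /seqsem_cat [a [b [-> [Ha [d [e [-> [Hd He]]]]]]]]].
case: (IH d Hd) => d' [Hr Hd'].
exists (a ++ d' ++ e); split; first exact: red_ctx.
split => //; apply/seqsem_cat; exists a, (d' ++ e); split => //; split => //.
by exists d', e.
Qed.

Lemma mvalid_ctx c T T' C : mvalid (sfill c T') C -> msub T T' -> mvalid (sfill c T) C.
Proof. by move=> HV HS; apply: mvalid_sub HV _; apply: msub_ctx. Qed.

Lemma stoupokD z1 z2 : stoupok (z1 `+` z2) <-> stoupok z1 /\ stoupok z2.
Proof.
split.
  by move=> H; split => A HA; apply: H; rewrite in_msetD HA ?orbT.
by case=> H1 H2 A; rewrite in_msetD => /orP [/H1|/H2].
Qed.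

Lemma stoupok1 A : stoupok [mset A] <-> sem A [::].
Proof.
split; first by move=> H; apply: H; rewrite in_mset1.
by move=> H B; rewrite in_mset1 => /eqP ->.
Qed.

Lemma stoupok0 : stoupok mset0.
Proof. by move=> A; rewrite in_mset0. Qed.

Lemma sseq1 A t : sseq [:: SF A] t <-> sem A t.
Proof.
split; first by case=> a [b [-> [Ha ->]]]; rewrite cats0.
by move=> H; exists t, [::]; rewrite cats0.
Qed.

Lemma msub_mid z z' D1 D2 T T' :
  (forall t, stoupok z -> sseq T t -> exists t', red t t' /\ stoupok z' /\ sseq T' t') ->
  msub (z, D1 ++ T ++ D2) (z', D1 ++ T' ++ D2).
Proof.
move=> H t [/= Hz /seqsem_cat [a [b [-> [Ha /seqsem_cat [c [d [-> [Hc Hd]]]]]]]]].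
case: (H c Hz Hc) => c' [Hr [Hz' Hc']].
exists (a ++ c' ++ d); split; first exact: red_ctx.
split => //; apply/seqsem_cat; exists a, (c' ++ d); split => //; split => //.
by apply/seqsem_cat; exists c', d.
Qed.

Lemma Msound X C : Mder X C -> mvalid X C.
Proof.
elim=> {X C}.
- by move=> A t [_ /sseq1].
-
  move=> X z1 z2 G D1 D2 B C D _ HG _ HV.
  apply: (mvalid_ctx HV).
  change (msub (z1 `+` z2, D1 ++ (SF (Over C B) :: G) ++ D2) (z2, D1 ++ [:: SF C] ++ D2)).
  apply: msub_mid => t /stoupokD [H1 H2] [f [b [-> [Hf Hb]]]].
  exists (f ++ b); split; first exact: red_refl.
  split => //; apply/sseq1; apply: Hf; exact: HG.
-
  move=> z G B C _ _ HV t [Hz Ht] x Hx; apply: HV; split => //.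
  by apply/seqsem_cat; exists t, x; split => //; split => //; apply/sseq1.
-
  move=> X z1 z2 G D1 D2 A C D _ HG _ HV.
  apply: (mvalid_ctx HV).
  have -> : D1 ++ G ++ SF (Under A C) :: D2 = D1 ++ (G ++ [:: SF (Under A C)]) ++ D2 by rewrite -catA.
  change (msub (z1 `+` z2, D1 ++ (G ++ [:: SF (Under A C)]) ++ D2) (z2, D1 ++ [:: SF C] ++ D2)).
  apply: msub_mid => t /stoupokD [H1 H2] /seqsem_cat [a [b [-> [Ha /sseq1 Hb]]]].
  exists (a ++ b); split; first exact: red_refl.
  split => //; apply/sseq1; apply: Hb; exact: HG.
-
  move=> z G A C _ _ HV t [Hz Ht] x Hx; apply: HV; split => //.
  by exists x, t.
-
  move=> X z D1 D2 A B D _ HV.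
  apply: (mvalid_ctx HV).
  change (msub (z, D1 ++ [:: SF (Prod A B)] ++ D2) (z, D1 ++ [:: SF A; SF B] ++ D2)).
  apply: msub_mid => t Hz /sseq1 [a [b [Ha [Hb Hr]]]].
  exists (a ++ b); split => //; split => //.
  by exists a, b; split => //; split => //; apply/sseq1.
-
  move=> z1 z2 D G A B _ HD _ HG t [/stoupokD [H1 H2] /seqsem_cat [a [b [-> [Ha Hb]]]]].
  exists a, b; split; first exact: HD.
  by split; [exact: HG|apply: red_refl].
-
  move=> X z D1 D2 A B _ HV.
  apply: (mvalid_ctx HV).
  change (msub (z, D1 ++ [:: SBr (sform (BoxInv A))] ++ D2) (z, D1 ++ [:: SF A] ++ D2)).
  apply: msub_mid => t Hz [a [b [-> [[_ /sseq1 Ha] ->]]]].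
  exists a; rewrite cats0; split; first exact: red_refl.
  by split => //; apply/sseq1.
-
  move=> Xi A _ HV t Ht; apply: HV; split; first exact: stoupok0.
  by exists t, [::]; rewrite cats0.
-
  move=> X z D1 D2 A B _ HV.
  apply: (mvalid_ctx HV).
  change (msub (z, D1 ++ [:: SF (Diam A)] ++ D2) (z, D1 ++ [:: SBr (sform A)] ++ D2)).
  apply: msub_mid => t Hz /sseq1 Ha.
  exists t; split; first exact: red_refl.
  split => //; exists t, [::]; rewrite cats0; split => //; split => //.
  by split; [exact: stoupok0|apply/sseq1].
-
  move=> Xi A _ HV t [_ [a [b [-> [Ha ->]]]]]; rewrite cats0; exact: HV.
-
  move=> X z G1 G2 A B _ HV.
  apply: (mvalid_ctx HV).
  change (msub (z, G1 ++ [:: SF (Bang A)] ++ G2) (z `+` [mset A], G1 ++ [::] ++ G2)).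
  apply: msub_mid => t Hz /sseq1 [H0 Hr].
  exists [::]; split => //; split => //.
  by apply/stoupokD; split => //; apply/stoupok1.
-
  move=> X z G1 G2 A B _ HV.
  apply: (mvalid_ctx HV).
  change (msub (z `+` [mset A], G1 ++ [::] ++ G2) (z, G1 ++ [:: SF A] ++ G2)).
  apply: msub_mid => t /stoupokD [Hz /stoupok1 H0] ->.
  exists [::]; split; first exact: red_refl.
  by split => //; apply/sseq1.
-
  move=> A B _ HV t [/= Hz ->]; split; last exact: red_refl.
  apply: HV; split => //.
-
  move=> X z z' G1 G2 G3 A B _ _ HV.
  apply: (mvalid_ctx HV).
  change (msub (z `+` [mset A], G1 ++ [:: SBr (mset0, [:: SBr (z', G2)])] ++ G3)
               (z `+` [mset A], G1 ++ [:: SBr (z' `+` [mset A], G2)] ++ G3)).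
  apply: msub_mid => t Hz [a [b [-> [[_ [c [d [-> [[Hz' Hc] ->]]]]] ->]]]].
  rewrite !cats0; exists c; split; first exact: red_refl.
  split => //; exists c, [::]; rewrite cats0; split => //; split => //.
  split => //; apply/stoupokD; split => //.
  by case/stoupokD: Hz.
Qed.

End MSound.

Local Close Scope fset_scope.
Local Close Scope mset_scope.


Definition rule := (seq nat * seq nat * seq nat * seq nat * bool)%type.
Definition rx (r : rule) := r.1.1.1.1.
Definition rw (r : rule) := r.1.1.1.2.
Definition ry (r : rule) := r.1.1.2.
Definition rz (r : rule) := r.1.2.
Definition rsl (r : rule) := r.2.

Fixpoint prodL (A : formula) (l : seq formula) : formula :=
  match l with [::] => A | B :: l' => Prod A (prodL B l') end.

Definition EV := Var 3.
Definition slotD := Diam (Diam EV).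
Definition outs (r : rule) : seq formula :=
  map Var (ry r) ++ (if rsl r then [:: slotD] else [::]) ++ map Var (rz r).
Definition core (r : rule) : formula :=
  match outs r with [::] => EV | A :: l => prodL A l end.
Definition wrapL (x : seq nat) (F : formula) :=
  match x with [::] => F | n :: x' => Under (prodL (Var n) (map Var x')) F end.
Definition wrapR (w : seq nat) (F : formula) :=
  match w with [::] => F | n :: w' => Over F (prodL (Var n) (map Var w')) end.
Definition mkB (r : rule) := wrapL (rx r) (wrapR (rw r) (core r)).
Definition mkU (r : rule) := Over (BoxInv (mkB r)) EV.

Definition rpair (r : rule) := (rx r ++ rw r, ry r ++ rz r).

Section Valid.
Variable rs : seq (seq nat * seq nat).
Local Notation red := (red rs).
Local Notation sem := (sem rs).

Lemma sem_var n : n != 3 -> sem (Var n) [:: n].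
Proof. by move=> /negbTE H /=; rewrite /Ecode H; apply: red_refl. Qed.

Lemma sem_prodL_intro A l t : seqsem sem (A :: l) t -> sem (prodL A l) t.
Proof.
elim: l A t => [|B l IH] A t /=.
  by case=> a [b [-> [Ha ->]]]; rewrite cats0.
case=> a [b [-> [Ha Hb]]]; exists a, b; split => //; split; last exact: red_refl.
exact: IH.
Qed.

Lemma sem_prodVar n l t : all (fun k => k != 3) (n :: l) ->
  sem (prodL (Var n) (map Var l)) t -> red t (n :: l).
Proof.
elim: l n t => [|m l IH] n t /= H.
  by rewrite /Ecode; move: H => /andP [/negbTE -> _].
case=> a [b [Ha [Hb Hr]]]; apply: red_trans Hr _.
have -> : n :: m :: l = [:: n] ++ (m :: l) by [].
apply: red_cat; first by move: Ha; rewrite /= /Ecode; move: H => /andP [/negbTE -> _].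
by apply: IH => //; case/andP: H.
Qed.

Lemma seqsem_vars l : all (fun k => k != 3) l -> seqsem sem (map Var l) l.
Proof.
elim: l => //= n l IH /andP [Hn Hl].
by exists [:: n], l; split => //; split; [exact: sem_var|exact: IH].
Qed.

Lemma sem_wrapL x F t : (forall a, red a x -> sem F (a ++ t)) ->
  all (fun k => k != 3) x -> sem (wrapL x F) t.
Proof.
case: x => [|n x] /= H Hx; first by apply: (H [::]); apply: red_refl.
by move=> a Ha; apply: H; apply: sem_prodVar Ha.
Qed.

Lemma sem_wrapR w F t : (forall c, red c w -> sem F (t ++ c)) ->
  all (fun k => k != 3) w -> sem (wrapR w F) t.
Proof.
case: w => [|n w] /= H Hw; first by rewrite -(cats0 t); apply: H; apply: red_refl.
by move=> c Hc; apply: H; apply: sem_prodVar Hc.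
Qed.

Definition rule_ok (r : rule) :=
  [/\ all (fun k => k != 3) (rx r ++ rw r ++ ry r ++ rz r), outs r != [::] & rpair r \in rs].

Lemma sem_core r : all (fun k => k != 3) (ry r ++ rz r) -> outs r != [::] ->
  sem (core r) (ry r ++ rz r).
Proof.
rewrite /core => H; case E: (outs r) => [|A l] // _.
apply: sem_prodL_intro; rewrite -E /outs.
rewrite all_cat in H; case/andP: H => Hy Hz.
apply/seqsem_cat; exists (ry r), (rz r); split => //; split; first exact: seqsem_vars.
apply/seqsem_cat; exists [::], (rz r); split => //; split; last exact: seqsem_vars.
case: (rsl r) => //=; exists [::], [::]; split => //; split => //.
by rewrite /= /Ecode /=; apply: red_refl.
Qed.

Lemma sem_mkU r : rule_ok r -> sem (mkU r) [::].
Proof.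
case=> Hall Hout Hin.
rewrite !all_cat in Hall; case/and4P: Hall => Hx Hw Hy Hz.
move=> e He /=; apply: (sem_down He).
apply: sem_wrapL => // a Ha; apply: sem_wrapR => // c Hc; rewrite cats0.
apply: (@sem_down _ _ _ (ry r ++ rz r)); last by apply: sem_core => //; rewrite all_cat Hy.
apply: red_trans (red_cat Ha Hc) _.
have := @red_step rs [::] (rx r ++ rw r) (ry r ++ rz r) [::] (ry r ++ rz r) Hin.
rewrite /= !cats0; apply; exact: red_refl.
Qed.

End Valid.


Definition FFV n := FF (Var n).
Definition slotF := FB [:: FB [:: FF EV]].
Definition outF (r : rule) : seq fterm :=
  map FFV (ry r) ++ (if rsl r then [:: slotF] else [::]) ++ map FFV (rz r).

Lemma F_prodR_l A l : Fder (map FF (A :: l)) (prodL A l).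
Proof.
elim: l A => [|B l IH] A /=; first exact: F_ax.
exact: (@F_ProdR [:: FF A] (map FF (B :: l)) _ _ (F_ax A) (IH B)).
Qed.

Lemma F_prodL_l D1 D2 A l C : Fder (D1 ++ map FF (A :: l) ++ D2) C ->
  Fder (D1 ++ FF (prodL A l) :: D2) C.
Proof.
elim: l A D1 => [|B l IH] A D1 //= H.
apply: (@F_ProdL FHole D1 D2 A (prodL B l) C) => /=.
have -> : D1 ++ FF A :: FF (prodL B l) :: D2 = (D1 ++ [:: FF A]) ++ FF (prodL B l) :: D2 by rewrite -catA.
by apply: IH; rewrite -catA.
Qed.

Lemma F_diamL2 D1 D2 C : Fder (D1 ++ slotF :: D2) C -> Fder (D1 ++ FF slotD :: D2) C.
Proof.
move=> H.
apply: (@F_DiamL FHole D1 D2 (Diam EV) C) => /=.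
exact: (@F_DiamL (FIn D1 FHole D2) [::] [::] EV C H).
Qed.

Lemma F_vars_R n l : Fder (map FFV (n :: l)) (prodL (Var n) (map Var l)).
Proof. by have := F_prodR_l (Var n) (map Var l); rewrite /= -map_comp. Qed.

Lemma F_outs r D1 D2 C : outs r != [::] ->
  Fder (D1 ++ outF r ++ D2) C -> Fder (D1 ++ FF (core r) :: D2) C.
Proof.
rewrite /core => Hne H; case E: (outs r) Hne => [|A l] // _.
apply: F_prodL_l; rewrite -E /outs !map_cat -!map_comp.
have EF : (FF \o Var) = FFV by [].
rewrite EF.
move: H; rewrite /outF; case: (rsl r) => /= H //.
move: H; rewrite -!catA /= => H.
rewrite catA; apply: F_diamL2; rewrite -catA; exact: H.
Qed.

Lemma F_useB r D1 D2 C : outs r != [::] ->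
  Fder (D1 ++ outF r ++ D2) C ->
  Fder (D1 ++ map FFV (rx r) ++ FF (mkB r) :: map FFV (rw r) ++ D2) C.
Proof.
move=> Hne /(F_outs Hne) H.
have H2 : Fder (D1 ++ FF (wrapR (rw r) (core r)) :: map FFV (rw r) ++ D2) C.
  rewrite /wrapR; case: (rw r) => [|n w] //=.
  apply: (@F_OverL FHole (map FFV (n :: w)) D1 D2 _ (core r) C) => //.
  exact: F_vars_R.
rewrite /mkB; case: (rx r) => [|n x]; first exact: H2.
apply: (@F_UnderL FHole (map FFV (n :: x)) D1 (map FFV (rw r) ++ D2) _ (wrapR (rw r) (core r)) C).
  exact: F_vars_R.
exact: H2.
Qed.

Lemma F_bracket r B1 B2 L post C :
  Fder (B1 ++ FF (Bang (mkU r)) :: B2 ++ L ++ FF (mkB r) :: post) C ->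
  Fder (B1 ++ FF (Bang (mkU r)) :: B2 ++ L ++ slotF :: post) C.
Proof.
move=> H.
set U := mkU r.
apply: (@F_BangP1 FHole [::] (B2 ++ L ++ slotF :: post) B1 U C) => /=.
have -> : FF (Bang U) :: B1 ++ B2 ++ L ++ slotF :: post =
          FF (Bang U) :: (B1 ++ B2 ++ L) ++ FB [:: FB [:: FF EV]] :: post by rewrite -!catA.
apply: (@F_BangC FHole (B1 ++ B2 ++ L) [:: FF EV] post U C) => //=.
set X := FIn (FF (Bang U) :: B1 ++ B2 ++ L) FHole post.
apply: (@F_BangL X [::] [:: FF EV] U C) => /=.
apply: (@F_OverL X [:: FF EV] [::] [::] EV (BoxInv (mkB r)) C); first exact: F_ax.
rewrite /X /=.
have -> : FF (Bang U) :: (B1 ++ B2 ++ L) ++ FB [:: FF (BoxInv (mkB r))] :: post =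
          (FF (Bang U) :: B1 ++ B2 ++ L) ++ FB [:: FF (BoxInv (mkB r))] :: post by [].
apply: (@F_BoxInvL FHole (FF (Bang U) :: B1 ++ B2 ++ L) post (mkB r) C) => /=.
rewrite -!catA.
apply: (@F_BangP2 FHole [::] (B2 ++ L ++ FF (mkB r) :: post) B1 U C) => /=.
exact: H.
Qed.

Definition bangsF (Rs : seq rule) := map (fun r => FF (Bang (mkU r))) Rs.

Lemma F_step Rs r pre post C : r \in Rs -> outs r != [::] ->
  Fder (bangsF Rs ++ pre ++ outF r ++ post) C ->
  Fder (bangsF Rs ++ pre ++ map FFV (rx r) ++ slotF :: map FFV (rw r) ++ post) C.
Proof.
case/splitPr => R1 R2 Hne H.
have H0 : Fder ((bangsF (R1 ++ r :: R2) ++ pre) ++ outF r ++ post) C by rewrite -catA.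
have H' := @F_useB r (bangsF (R1 ++ r :: R2) ++ pre) post C Hne H0.
set B1 := bangsF R1; set B2 := bangsF R2.
have EB : bangsF (R1 ++ r :: R2) = B1 ++ FF (Bang (mkU r)) :: B2 by rewrite /bangsF map_cat.
rewrite EB in H' *.
have -> : (B1 ++ FF (Bang (mkU r)) :: B2) ++ pre ++ map FFV (rx r) ++ slotF :: map FFV (rw r) ++ post
  = B1 ++ FF (Bang (mkU r)) :: B2 ++ (pre ++ map FFV (rx r)) ++ slotF :: (map FFV (rw r) ++ post)
  by rewrite -!catA.
apply: F_bracket.
by move: H'; rewrite -!catA.
Qed.

Definition BP (r0 : rule) (Rs' : seq rule) :=
  prodL (Bang (mkU r0)) (map (fun r => Bang (mkU r)) Rs').
Definition KF r0 Rs' := Prod (BP r0 Rs') (Var 2).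
Definition HF r0 Rs' q :=
  Under (prodL (Bang (mkU r0)) (map (fun r => Bang (mkU r)) Rs' ++ [:: Var 0; slotD; Var q]))
        (Over (KF r0 Rs') (Var 1)).

Lemma F_final r0 Rs' : Fder (bangsF (r0 :: Rs') ++ [:: FFV 2]) (KF r0 Rs').
Proof.
apply: F_ProdR; last exact: F_ax.
have := F_prodR_l (Bang (mkU r0)) (map (fun r => Bang (mkU r)) Rs').
by rewrite /bangsF /= -map_comp.
Qed.

Lemma F_init r0 Rs' q (G : seq fterm) : G <> [::] ->
  Fder (bangsF (r0 :: Rs') ++ [:: FFV 0; slotF; FFV q] ++ G ++ [:: FFV 1]) (KF r0 Rs') ->
  Fder G (HF r0 Rs' q).
Proof.
move=> HG H.
apply: F_UnderR => //.
apply: F_OverR => //.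
have -> : (FF (prodL (Bang (mkU r0)) ([seq Bang (mkU r) | r <- Rs'] ++ [:: Var 0; slotD; Var q])) :: G) ++ [:: FFV 1]
  = [::] ++ FF (prodL (Bang (mkU r0)) ([seq Bang (mkU r) | r <- Rs'] ++ [:: Var 0; slotD; Var q])) :: (G ++ [:: FFV 1]) by [].
apply: F_prodL_l.
have -> : map FF (Bang (mkU r0) :: [seq Bang (mkU r) | r <- Rs'] ++ [:: Var 0; slotD; Var q])
   = bangsF (r0 :: Rs') ++ [:: FFV 0; FF slotD; FFV q].
  by rewrite /bangsF /= map_cat -map_comp.
have -> : [::] ++ (bangsF (r0 :: Rs') ++ [:: FFV 0; FF slotD; FFV q]) ++ G ++ [:: FFV 1]
   = (bangsF (r0 :: Rs') ++ [:: FFV 0]) ++ FF slotD :: (FFV q :: G ++ [:: FFV 1]).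
  by rewrite -!catA.
apply: F_diamL2.
by move: H; rewrite -!catA.
Qed.

Local Open Scope mset_scope.



Definition SFV n := SF (Var n).
Definition slotM := SBr (mset0, [:: SBr (sform EV)]).
Definition outM (r : rule) : seq sterm :=
  map SFV (ry r) ++ (if rsl r then [:: slotM] else [::]) ++ map SFV (rz r).
Definition zeta (Rs : seq rule) : stoup :=
  foldr (fun r z => [mset mkU r] `+` z) mset0 Rs.

Lemma M_prodR_l A l : Mder (mset0, map SF (A :: l)) (prodL A l).
Proof.
elim: l A => [|B l IH] A /=; first exact: M_ax.
have := @M_ProdR mset0 mset0 [:: SF A] (map SF (B :: l)) _ _ (M_ax A) (IH B).
by rewrite mset0D.
Qed.

Lemma M_prodL_l z D1 D2 A l C : Mder (z, D1 ++ map SF (A :: l) ++ D2) C ->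
  Mder (z, D1 ++ SF (prodL A l) :: D2) C.
Proof.
elim: l A D1 => [|B l IH] A D1 //= H.
apply: (@M_ProdL SHole z D1 D2 A (prodL B l) C) => /=.
have -> : D1 ++ SF A :: SF (prodL B l) :: D2 = (D1 ++ [:: SF A]) ++ SF (prodL B l) :: D2 by rewrite -catA.
by apply: IH; rewrite -catA.
Qed.

Lemma M_diamL2 z D1 D2 C : Mder (z, D1 ++ slotM :: D2) C -> Mder (z, D1 ++ SF slotD :: D2) C.
Proof.
move=> H.
apply: (@M_DiamL SHole z D1 D2 (Diam EV) C) => /=.
exact: (@M_DiamL (SIn z D1 SHole D2) mset0 [::] [::] EV C H).
Qed.

Lemma M_vars_R n l : Mder (mset0, map SFV (n :: l)) (prodL (Var n) (map Var l)).
Proof. by have := M_prodR_l (Var n) (map Var l); rewrite /= -map_comp. Qed.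

Lemma M_outs r z D1 D2 C : outs r != [::] ->
  Mder (z, D1 ++ outM r ++ D2) C -> Mder (z, D1 ++ SF (core r) :: D2) C.
Proof.
rewrite /core => Hne H; case E: (outs r) Hne => [|A l] // _.
apply: M_prodL_l; rewrite -E /outs !map_cat -!map_comp.
have EF : (SF \o Var) = SFV by [].
rewrite EF.
move: H; rewrite /outM; case: (rsl r) => /= H //.
move: H; rewrite -!catA /= => H.
rewrite catA; apply: M_diamL2; rewrite -catA; exact: H.
Qed.

Lemma M_useB r z D1 D2 C : outs r != [::] ->
  Mder (z, D1 ++ outM r ++ D2) C ->
  Mder (z, D1 ++ map SFV (rx r) ++ SF (mkB r) :: map SFV (rw r) ++ D2) C.
Proof.
move=> Hne /(M_outs Hne) H.
have H2 : Mder (z, D1 ++ SF (wrapR (rw r) (core r)) :: map SFV (rw r) ++ D2) C.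
  rewrite /wrapR; case: (rw r) => [|n w] //=.
  have := @M_OverL SHole mset0 z (map SFV (n :: w)) D1 D2 _ (core r) C (M_vars_R n w) H.
  by rewrite mset0D.
rewrite /mkB; case: (rx r) => [|n x]; first exact: H2.
have := @M_UnderL SHole mset0 z (map SFV (n :: x)) D1 (map SFV (rw r) ++ D2) _
   (wrapR (rw r) (core r)) C (M_vars_R n x) H2.
by rewrite mset0D.
Qed.

Lemma M_bracket r z L post C :
  Mder (z `+` [mset mkU r], L ++ SF (mkB r) :: post) C ->
  Mder (z `+` [mset mkU r], L ++ slotM :: post) C.
Proof.
move=> H.
set U := mkU r.
apply: (@M_BangC' SHole z mset0 L [:: SFV 3] post U C); first by left.
rewrite /=.
set X := SIn (z `+` [mset U]) L SHole post.
apply: (@M_BangP X mset0 [::] [:: SF EV] U C) => /=.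
have := @M_OverL X mset0 mset0 [:: SF EV] [::] [::] EV (BoxInv (mkB r)) C (M_ax EV).
rewrite mset0D /=; apply.
apply: (@M_BoxInvL SHole (z `+` [mset U]) L post (mkB r) C) => /=.
exact: H.
Qed.

Lemma zeta_split Rs r : r \in Rs -> exists z, zeta Rs = z `+` [mset mkU r].
Proof.
elim: Rs => //= r1 Rs IH; rewrite in_cons => /orP [/eqP <-|/IH [z ->]].
  by exists (zeta Rs); rewrite msetDC.
by exists ([mset mkU r1] `+` z); rewrite msetDA.
Qed.

Lemma M_step Rs r pre post C : r \in Rs -> outs r != [::] ->
  Mder (zeta Rs, pre ++ outM r ++ post) C ->
  Mder (zeta Rs, pre ++ map SFV (rx r) ++ slotM :: map SFV (rw r) ++ post) C.
Proof.
move=> /zeta_split [z ->] Hne H.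
have H' := M_useB Hne H.
have -> : pre ++ map SFV (rx r) ++ slotM :: map SFV (rw r) ++ post =
  (pre ++ map SFV (rx r)) ++ slotM :: (map SFV (rw r) ++ post) by rewrite -catA.
apply: M_bracket.
by move: H'; rewrite -catA.
Qed.

Lemma M_bang1 U : Mder ([mset U], [::]) (Bang U).
Proof.
apply: M_BangR'.
have := @M_BangP SHole mset0 [::] [::] U U (M_ax U).
by rewrite mset0D.
Qed.

Lemma M_BP r0 Rs' : Mder (zeta (r0 :: Rs'), [::]) (BP r0 Rs').
Proof.
elim: Rs' r0 => [|r1 Rs IH] r0 /=.
  rewrite msetD0; exact: M_bang1.
exact: (@M_ProdR [mset mkU r0] (zeta (r1 :: Rs)) [::] [::] _ _ (M_bang1 _) (IH r1)).
Qed.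

Lemma M_final r0 Rs' : Mder (zeta (r0 :: Rs'), [:: SFV 2]) (KF r0 Rs').
Proof.
have := @M_ProdR (zeta (r0 :: Rs')) mset0 [::] [:: SFV 2] _ _ (M_BP r0 Rs') (M_ax (Var 2)).
by rewrite msetD0.
Qed.

Lemma M_bangsL z Rs rest C : Mder (z `+` zeta Rs, rest) C ->
  Mder (z, map (fun r => SF (Bang (mkU r))) Rs ++ rest) C.
Proof.
elim: Rs z => [|r Rs IH] z /=; first by rewrite msetD0.
move=> H.
apply: (@M_BangL SHole z [::] (map (fun r => SF (Bang (mkU r))) Rs ++ rest) (mkU r) C) => /=.
by apply: IH; rewrite -msetDA.
Qed.

Lemma M_init r0 Rs' q (G : seq sterm) : G <> [::] ->
  Mder (zeta (r0 :: Rs'), [:: SFV 0; slotM; SFV q] ++ G ++ [:: SFV 1]) (KF r0 Rs') ->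
  Mder (mset0, G) (HF r0 Rs' q).
Proof.
move=> HG H.
apply: M_UnderR; first by left.
apply: M_OverR; first by left.
have -> : (SF (prodL (Bang (mkU r0)) ([seq Bang (mkU r) | r <- Rs'] ++ [:: Var 0; slotD; Var q])) :: G) ++ [:: SFV 1]
  = [::] ++ SF (prodL (Bang (mkU r0)) ([seq Bang (mkU r) | r <- Rs'] ++ [:: Var 0; slotD; Var q])) :: (G ++ [:: SFV 1]) by [].
apply: M_prodL_l.
have -> : map SF (Bang (mkU r0) :: [seq Bang (mkU r) | r <- Rs'] ++ [:: Var 0; slotD; Var q])
   = map (fun r => SF (Bang (mkU r))) (r0 :: Rs') ++ [:: SFV 0; SF slotD; SFV q].
  by rewrite /= map_cat -map_comp.
rewrite cat0s -catA.
apply: M_bangsL; rewrite mset0D.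
have -> : [:: SFV 0; SF slotD; SFV q] ++ G ++ [:: SFV 1] =
   [:: SFV 0] ++ SF slotD :: (SFV q :: G ++ [:: SFV 1]) by [].
by apply: M_diamL2.
Qed.

Local Close Scope mset_scope.


Section TMenc.
Variables (Q Gam : finType) (blank : Gam)
          (delta : Q -> Gam -> option (Q * Gam * bool)) (q0 qacc : Q).

Definition gc (g : Gam) : nat := 4 + (choice.pickle g).*2.
Definition qc (q : Q) : nat := 5 + (choice.pickle q).*2.

Lemma odd_gc g : odd (gc g) = false.
Proof. by rewrite /gc oddD odd_double. Qed.
Lemma odd_qc q : odd (qc q) = true.
Proof. by rewrite /gc oddD odd_double. Qed.
Lemma gc_inj : injective gc.
Proof. by move=> a b /addnI /(can_inj doubleK) /(pcan_inj choice.pickleK). Qed.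
Lemma qc_inj : injective qc.
Proof. by move=> a b /addnI /(can_inj doubleK) /(pcan_inj choice.pickleK). Qed.
Lemma gc_ge g : 4 <= gc g. Proof. by rewrite /gc leq_addr. Qed.
Lemma qc_ge q : 5 <= qc q. Proof. by rewrite /qc leq_addr. Qed.

Definition isQ (n : nat) := odd n && (5 <= n).
Lemma isQ_qc q : isQ (qc q). Proof. by rewrite /isQ odd_qc qc_ge. Qed.
Lemma isQ_gc g : isQ (gc g) = false. Proof. by rewrite /isQ odd_gc. Qed.

Definition transR (q : Q) (a : Gam) : seq rule :=
  match delta q a with
  | Some (q', b, true) =>
      ([::], [:: qc q; gc a], [:: gc b], [:: qc q'], true) ::
      (if a == blank then [:: ([::], [:: qc q; 1], [:: gc b], [:: qc q'; 1], true)] else [::])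
  | Some (q', b, false) =>
      [seq ([:: gc c], [:: qc q; gc a], [::], [:: qc q'; gc c; gc b], true) | c <- enum Gam] ++
      ([:: 0], [:: qc q; gc a], [:: 0], [:: qc q'; gc blank; gc b], true) ::
      (if a == blank then
        [seq ([:: gc c], [:: qc q; 1], [::], [:: qc q'; gc c; gc b; 1], true) | c <- enum Gam] ++
        [:: ([:: 0], [:: qc q; 1], [:: 0], [:: qc q'; gc blank; gc b; 1], true)]
       else [::])
  | None => [::]
  end.

Definition eraseR : seq rule :=
  [seq ([:: gc c], [:: qc qacc], [::], [:: qc qacc], true) | c <- enum Gam] ++
  [seq ([::], [:: qc qacc; gc a], [::], [:: qc qacc], true) | a <- enum Gam].

Definition finalR : rule := ([:: 0], [:: qc qacc; 1], [:: 2], [::], false).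

Definition transAll : seq rule :=
  flatten [seq flatten [seq transR q a | a <- enum Gam] | q <- enum Q].

Definition RsT' := eraseR ++ transAll.
Definition RsT := finalR :: RsT'.
Definition rsT := map rpair RsT.

Lemma transR_in q a r : r \in transR q a -> r \in RsT.
Proof.
move=> H; rewrite /RsT /RsT' in_cons mem_cat; apply/orP; right; apply/orP; right.
apply/flatten_mapP; exists q; first by rewrite mem_enum.
by apply/flatten_mapP; exists a; first by rewrite mem_enum.
Qed.

Lemma eraseR_in r : r \in eraseR -> r \in RsT.
Proof. by move=> H; rewrite /RsT /RsT' in_cons mem_cat H orbT. Qed.

Lemma finalR_in : finalR \in RsT.
Proof. by rewrite in_cons eqxx. Qed.

Definition Lstr (c : tm_config Q Gam) := let: (q, l, r) := c in 0 :: rev (map gc l).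
Definition Rstr (c : tm_config Q Gam) := let: (q, l, r) := c in qc q :: map gc r ++ [:: 1].

Section Fwd.
Variables (D : seq nat -> seq nat -> Prop) (D0 : seq nat -> Prop).
Hypothesis Dstep : forall r P S, r \in RsT -> rsl r ->
  D (P ++ ry r) (rz r ++ S) -> D (P ++ rx r) (rw r ++ S).
Hypothesis Dfin : forall P S, D0 (P ++ ry finalR ++ rz finalR ++ S) -> D (P ++ rx finalR) (rw finalR ++ S).
Hypothesis D0s : D0 [:: 2].

Lemma erase_all l r : D (Lstr (qacc, l, r)) (Rstr (qacc, l, r)).
Proof.
elim: l => [|c l IH].
  elim: r => [|a r IH].
    by have := @Dfin [::] [::] D0s.
  have Hin : ([::], [:: qc qacc; gc a], [::], [:: qc qacc], true) \in RsT.
    by apply: eraseR_in; rewrite mem_cat; apply/orP; right; apply/mapP; exists a; rewrite ?mem_enum.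
  have := @Dstep _ [:: 0] (map gc r ++ [:: 1]) Hin erefl; rewrite /= ?cats0; apply.
  exact: IH.
have Hin : ([:: gc c], [:: qc qacc], [::], [:: qc qacc], true) \in RsT.
  by apply: eraseR_in; rewrite mem_cat; apply/orP; left; apply/mapP; exists c; rewrite ?mem_enum.
have := @Dstep _ (0 :: rev (map gc l)) (map gc r ++ [:: 1]) Hin erefl.
by rewrite /= ?cats0 rev_cons -cats1 -cat_cons; apply.
Qed.

Lemma fwd_step c c' : tm_step blank delta c = Some c' ->
  D (Lstr c') (Rstr c') -> D (Lstr c) (Rstr c).
Proof.
case: c => [[q l] r] /=.
set a := head blank r.
case Ed: (delta q a) => [[[q' b] [|]]|] // [<-].
-
  have Hin1 : ([::], [:: qc q; gc a], [:: gc b], [:: qc q'], true) \in RsT.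
    by apply: (@transR_in q a); rewrite /transR Ed in_cons eqxx.
  case: r @a Ed Hin1 => [|a0 r] /= Ed Hin1.
    have Hin : ([::], [:: qc q; 1], [:: gc b], [:: qc q'; 1], true) \in RsT.
      by apply: (@transR_in q blank); rewrite /transR Ed eqxx !in_cons eqxx orbT.
    have := @Dstep _ (0 :: rev (map gc l)) [::] Hin erefl.
    by rewrite /= ?cats0 rev_cons -cats1 -cat_cons; apply.
  have := @Dstep _ (0 :: rev (map gc l)) (map gc r ++ [:: 1]) Hin1 erefl.
  by rewrite /= ?cats0 rev_cons -cats1 -cat_cons; apply.
-
  case: r @a Ed => [|a0 r] /= Ed; case: l => [|c l] /=.
  + have Hin : ([:: 0], [:: qc q; 1], [:: 0], [:: qc q'; gc blank; gc b; 1], true) \in RsT.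
      apply: (@transR_in q blank); rewrite /transR Ed eqxx mem_cat; apply/orP; right.
      by rewrite in_cons mem_cat in_cons eqxx !orbT.
    by have := @Dstep _ [::] [::] Hin erefl; rewrite /= ?cats0; apply.
  + have Hin : ([:: gc c], [:: qc q; 1], [::], [:: qc q'; gc c; gc b; 1], true) \in RsT.
      apply: (@transR_in q blank); rewrite /transR Ed eqxx mem_cat; apply/orP; right.
      rewrite in_cons mem_cat; apply/orP; right; apply/orP; left.
      by apply/mapP; exists c; rewrite ?mem_enum.
    have := @Dstep _ (0 :: rev (map gc l)) [::] Hin erefl.
    by rewrite /= ?cats0 rev_cons -cats1 -cat_cons; apply.
  + have Hin : ([:: 0], [:: qc q; gc a0], [:: 0], [:: qc q'; gc blank; gc b], true) \in RsT.
      apply: (@transR_in q a0); rewrite /transR Ed mem_cat; apply/orP; right.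
      by rewrite in_cons eqxx.
    by have := @Dstep _ [::] (map gc r ++ [:: 1]) Hin erefl; rewrite /=; apply.
  + have Hin : ([:: gc c], [:: qc q; gc a0], [::], [:: qc q'; gc c; gc b], true) \in RsT.
      apply: (@transR_in q a0); rewrite /transR Ed mem_cat; apply/orP; left.
      by apply/mapP; exists c; rewrite ?mem_enum.
    have := @Dstep _ (0 :: rev (map gc l)) (map gc r ++ [:: 1]) Hin erefl.
    by rewrite /= ?cats0 rev_cons -cats1 -cat_cons; apply.
Qed.

Lemma fwd n c l r : tm_run blank delta n c = Some (qacc, l, r) -> D (Lstr c) (Rstr c).
Proof.
elim: n c => [|n IH] c /=; first by case=> ->; exact: erase_all.
case E: (tm_step blank delta c) => [c'|] //= H.
exact: (fwd_step E (IH c' H)).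
Qed.
End Fwd.


Lemma split_uniq (P : pred nat) s1 x s2 t1 y t2 :
  s1 ++ x :: s2 = t1 ++ y :: t2 -> P x -> P y -> ~~ has P t1 -> ~~ has P t2 ->
  [/\ s1 = t1, x = y & s2 = t2].
Proof.
elim: s1 t1 => [|a s1 IH] [|b t1] /=.
- by case=> -> ->.
- by case=> -> _ Hx _; rewrite Hx.
- by case=> _ E Hx _ _ /negP []; rewrite -E has_cat /= Hx orbT.
- case=> -> /IH H Hx Hy /norP [_ H1] H2.
  by case: (H Hx Hy H1 H2) => -> -> ->.
Qed.

Lemma noQ_L l : ~~ has isQ (0 :: rev (map gc l)).
Proof. by rewrite /= has_rev; apply/hasPn => x /mapP [g _ ->]; rewrite isQ_gc. Qed.

Lemma noQ_R r : ~~ has isQ (map gc r ++ [:: 1]).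
Proof. by rewrite has_cat /= orbF; apply/hasPn => x /mapP [g _ ->]; rewrite isQ_gc. Qed.

Lemma gc_ne0 g : (gc g == 0) = false. Proof. by []. Qed.
Lemma gc_ne1 g : (gc g == 1) = false. Proof. by []. Qed.

Lemma lem_L1 u c l : u ++ [:: gc c] = 0 :: rev (map gc l) ->
  exists l', l = c :: l' /\ u = 0 :: rev (map gc l').
Proof.
case: l => [|c' l] /=.
  case: u => [|x u] /=; first by move/(congr1 (head 0)) => /= /eqP; rewrite gc_ne0.
  by case=> _; case: u.
rewrite rev_cons -rcons_cons cats1 => /eqP; rewrite eqseq_rcons => /andP [/eqP Eu /eqP Ec].
by exists l; rewrite (gc_inj Ec) Eu.
Qed.

Lemma lem_L2 u l : u ++ [:: 0] = 0 :: rev (map gc l) -> l = [::] /\ u = [::].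
Proof.
case: l => [|c' l] /=.
  by case: u => [|x u] //= [_]; case: u.
rewrite rev_cons -rcons_cons cats1 => /eqP; rewrite eqseq_rcons => /andP [_].
by rewrite eq_sym gc_ne0.
Qed.

Lemma lem_R1 a v r : gc a :: v = map gc r ++ [:: 1] ->
  exists r', r = a :: r' /\ v = map gc r' ++ [:: 1].
Proof.
case: r => [|a' r] /=.
  by move/(congr1 (head 0)) => /= /eqP; rewrite gc_ne1.
move=> E; have Ea : gc a = gc a' by move/(congr1 (head 0)): E.
have Ev : v = map gc r ++ [:: 1] by move/(congr1 behead): E.
by exists r; rewrite (gc_inj Ea) Ev.
Qed.

Lemma lem_R2 v r : 1 :: v = map gc r ++ [:: 1] -> r = [::] /\ v = [::].
Proof.
case: r => [|a' r] /=; first by case.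
by move/(congr1 (head 0)) => /= /eqP; rewrite eq_sym gc_ne1.
Qed.

Lemma inv_step c u v (p : rule) : p \in RsT ->
  Lstr c ++ Rstr c = u ++ (rx p ++ rw p) ++ v ->
  c.1.1 = qacc \/ exists c', tm_step blank delta c = Some c' /\
      u ++ (ry p ++ rz p) ++ v = Lstr c' ++ Rstr c'.
Proof.
case: c => [[q l] r] /= Hin.
have Hsplit : forall x q1 w',
   0 :: rev (map gc l) ++ qc q :: map gc r ++ [:: 1] = u ++ (x ++ qc q1 :: w') ++ v ->
   [/\ u ++ x = 0 :: rev (map gc l), q1 = q & w' ++ v = map gc r ++ [:: 1]].
  move=> x q1 w'; rewrite -catA catA -cat_cons => E.
  have [H1 H2 H3] := split_uniq (esym E) (isQ_qc q1) (isQ_qc q) (noQ_L l) (noQ_R r).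
  by split => //; apply: qc_inj.
move: Hin; rewrite /RsT /RsT' in_cons mem_cat => /orP [/eqP ->|/orP [Her|Htr]].
- move=> E; left.
  by case: (Hsplit [:: 0] qacc [:: 1] E).
- move: Her; rewrite mem_cat => /orP [/mapP [g _ ->] E|/mapP [g _ ->] E]; left.
  + by case: (Hsplit [:: gc g] qacc [::] E).
  + by case: (Hsplit [::] qacc [:: gc g] E).
case/flatten_mapP: Htr => q1 _ /flatten_mapP [a _].
rewrite /transR; case Ed: (delta q1 a) => [[[q' b] [|]]|] //.
- rewrite in_cons => /orP [/eqP -> E|].
    case: (Hsplit [::] q1 [:: gc a] E) => /= Hu Hq Hv; subst q1.
    case: (lem_R1 Hv) => r' [Er Ev]; subst r v; right.
    exists (q', b :: l, r'); rewrite /= Ed; split => //.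
    by move: Hu; rewrite cats0 => ->; rewrite rev_cons -cats1 -catA.
  case: eqP => // Ea; rewrite in_cons orbF => /eqP -> E; subst a.
  case: (Hsplit [::] q1 [:: 1] E) => /= Hu Hq Hv; subst q1.
  case: (lem_R2 Hv) => Er Ev; subst r v; right.
  exists (q', b :: l, [::]); rewrite /= Ed; split => //.
  by move: Hu; rewrite cats0 => ->; rewrite rev_cons -cats1 -catA.
- rewrite mem_cat in_cons => /orP [/mapP [c _ -> E]|/orP [/eqP -> E|]].
  + case: (Hsplit [:: gc c] q1 [:: gc a] E) => /= Hu Hq Hv; subst q1.
    case: (lem_R1 Hv) => r' [Er Ev]; subst r v.
    case: (lem_L1 Hu) => l' [El Eu]; subst l u; right.
    by exists (q', l', c :: b :: r'); rewrite /= Ed; split.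
  + case: (Hsplit [:: 0] q1 [:: gc a] E) => /= Hu Hq Hv; subst q1.
    case: (lem_R1 Hv) => r' [Er Ev]; subst r v.
    case: (lem_L2 Hu) => El Eu; subst l u; right.
    by exists (q', [::], blank :: b :: r'); rewrite /= Ed; split.
  case: eqP => // Ea; subst a; rewrite mem_cat in_cons orbF => /orP [/mapP [c _ -> E]|/eqP -> E].
  + case: (Hsplit [:: gc c] q1 [:: 1] E) => /= Hu Hq Hv; subst q1.
    case: (lem_R2 Hv) => Er Ev; subst r v.
    case: (lem_L1 Hu) => l' [El Eu]; subst l u; right.
    by exists (q', l', [:: c; b]); rewrite /= Ed; split.
  + case: (Hsplit [:: 0] q1 [:: 1] E) => /= Hu Hq Hv; subst q1.
    case: (lem_R2 Hv) => Er Ev; subst r v.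
    case: (lem_L2 Hu) => El Eu; subst l u; right.
    by exists (q', [::], [:: blank; b]); rewrite /= Ed; split.
Qed.

Lemma tm_run_last n c c1 c2 : tm_run blank delta n c = Some c1 ->
  tm_step blank delta c1 = Some c2 -> tm_run blank delta n.+1 c = Some c2.
Proof.
elim: n c => [|n IH] c /=; first by case=> -> ->.
case: (tm_step blank delta c) => [c'|] //= H1 H2.
exact: IH H1 H2.
Qed.

Definition accepted c0 := exists n l r, tm_run blank delta n c0 = Some (qacc, l, r).

Lemma red_accept c0 t : red rsT (Lstr c0 ++ Rstr c0) t -> t = [:: 2] -> accepted c0.
Proof.
set P := fun t => accepted c0 \/ exists n c, tm_run blank delta n c0 = Some c /\ t = Lstr c ++ Rstr c.
suff : forall t1 t2, red rsT t1 t2 -> P t1 -> P t2.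
  move=> H Hr Et; case: (H _ _ Hr); first by right; exists 0, c0.
    by [].
  case=> n [[[q l] r] [_ Ec]]; move: Ec; rewrite Et.
  by [].
move=> t1 t2; elim=> // u l r v t3 Hin _ IH HP; apply: IH.
case: HP => [Ha|[n [c [Hn Ec]]]]; first by left.
case/mapP: Hin => p Hp [El Er].
have Ecx : Lstr c ++ Rstr c = u ++ (rx p ++ rw p) ++ v by rewrite -Ec El.
case: (inv_step Hp Ecx) => [Hq|[c' [Hs Ec']]].
  left; exists n; move: Hn Hq; clear Ec Ecx; case: c => [[q' l'] r'] /= Hn Hq.
  by exists l', r'; rewrite Hn Hq.
right; exists n.+1, c'; split; first exact: tm_run_last Hn Hs.
by rewrite Er.
Qed.

Lemma gc_ne3 g : (gc g != 3). Proof. by []. Qed.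
Lemma qc_ne3 q : (qc q != 3). Proof. by rewrite /qc; case: (choice.pickle q). Qed.

Definition wfr (r : rule) :=
  all (fun k => k != 3) (rx r ++ rw r ++ ry r ++ rz r) && (rsl r || (ry r != [::])).

Lemma RsT_ok r : r \in RsT -> wfr r.
Proof.
rewrite /RsT /RsT' in_cons mem_cat => /orP [/eqP ->|/orP [Her|Htr]].
- by rewrite /wfr.
- move: Her; rewrite mem_cat => /orP [/mapP [g _ ->]|/mapP [g _ ->]];
  by rewrite /wfr.
case/flatten_mapP: Htr => q1 _ /flatten_mapP [a _].
rewrite /transR; case Ed: (delta q1 a) => [[[q' b] [|]]|] //.
- rewrite in_cons => /orP [/eqP ->|]; first by rewrite /wfr.
  by case: eqP => // _; rewrite in_cons orbF => /eqP ->; rewrite /wfr.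
- rewrite mem_cat in_cons => /orP [/mapP [c _ ->]|/orP [/eqP ->|]];
    first (by rewrite /wfr); first by rewrite /wfr.
  case: eqP => // _; rewrite mem_cat in_cons orbF => /orP [/mapP [c _ ->]|/eqP ->];
  by rewrite /wfr.
Qed.

End TMenc.

Local Open Scope mset_scope.



Fixpoint fterm_rect' (P : fterm -> Prop) (Q : seq fterm -> Prop)
  (Hf : forall A, P (FF A)) (Hb : forall G, Q G -> P (FB G))
  (Hn : Q [::]) (Hc : forall x G, P x -> Q G -> Q (x :: G)) (x : fterm) : P x :=
  match x with
  | FF A => Hf A
  | FB G => Hb G ((fix go (G : seq fterm) : Q G :=
                     match G with
                     | [::] => Hn
                     | y :: G' => Hc y G' (@fterm_rect' P Q Hf Hb Hn Hc y) (go G')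
                     end) G)
  end.

Fixpoint sterm_rect' (P : sterm -> Prop) (Q : seq sterm -> Prop)
  (Hf : forall A, P (SF A)) (Hb : forall z G, Q G -> P (SB z G))
  (Hn : Q [::]) (Hc : forall x G, P x -> Q G -> Q (x :: G)) (x : sterm) : P x :=
  match x with
  | SF A => Hf A
  | SB z G => Hb z G ((fix go (G : seq sterm) : Q G :=
                     match G with
                     | [::] => Hn
                     | y :: G' => Hc y G' (@sterm_rect' P Q Hf Hb Hn Hc y) (go G')
                     end) G)
  end.

Definition isV (A : formula) := if A is Var n then n != 3 else false.
Definition vcode (A : formula) := if A is Var n then [:: n] else [::].
Definition lcode (As : seq formula) := flatten (map vcode As).

Lemma lcode_cat a b : lcode (a ++ b) = lcode a ++ lcode b.
Proof. by rewrite /lcode map_cat flatten_cat. Qed.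

Section Leaves.
Variable rs : seq (seq nat * seq nat).

Lemma sem_isV A : isV A -> sem rs A (vcode A).
Proof. by case: A => // n Hn; apply: sem_var. Qed.

Lemma fseq_leaves (G : fmeta) : all isV (fmeta_leaves G) ->
  seqsem (fsem rs) G (lcode (fmeta_leaves G)).
Proof.
pose P := fun x : fterm => all isV (fterm_leaves x) -> fsem rs x (lcode (fterm_leaves x)).
pose Qp := fun G : seq fterm => all isV (flatten (map fterm_leaves G)) ->
  seqsem (fsem rs) G (lcode (flatten (map fterm_leaves G))).
have : forall G, Qp G.
  move=> G0; elim: G0 => [|x G0 IH]; first by [].
  have Hx : P x.
    apply: (@fterm_rect' P Qp) => [A|G1 HG|//|y G1 Hy HG].
    - by rewrite /P /= andbT /lcode /= cats0 => /sem_isV.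
    - by rewrite /P /=.
    - rewrite /Qp /= all_cat => /andP [H1 H2].
      by rewrite lcode_cat; exists (lcode (fterm_leaves y)), (lcode (flatten (map fterm_leaves G1))); split => //; split; [apply: Hy|apply: HG].
  rewrite /Qp /= all_cat => /andP [H1 H2].
  by rewrite lcode_cat; exists (lcode (fterm_leaves x)), (lcode (flatten (map fterm_leaves G0))); split => //; split; [apply: Hx|apply: IH].
by move=> HQ; apply: HQ.
Qed.

Lemma sseq_leaves (G : seq sterm) : all sterm_empty G -> all isV (flatten (map sterm_leaves G)) ->
  seqsem (ssem rs) G (lcode (flatten (map sterm_leaves G))).
Proof.
pose P := fun x : sterm => sterm_empty x -> all isV (sterm_leaves x) -> ssem rs x (lcode (sterm_leaves x)).
pose Qp := fun G : seq sterm => all sterm_empty G -> all isV (flatten (map sterm_leaves G)) ->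
  seqsem (ssem rs) G (lcode (flatten (map sterm_leaves G))).
have : forall G, Qp G.
  move=> G0; elim: G0 => [|x G0 IH]; first by [].
  have Hx : P x.
    apply: (@sterm_rect' P Qp) => [A|z G1 HG|//|y G1 Hy HG].
    - by rewrite /P /= andbT /lcode /= cats0 => _ /sem_isV.
    - rewrite /P /= => /andP [/eqP -> He] Hv; split; first exact: stoupok0.
      exact: HG.
    - rewrite /Qp /= all_cat => /andP [E1 E2] /andP [H1 H2].
      by rewrite lcode_cat; exists (lcode (sterm_leaves y)), (lcode (flatten (map sterm_leaves G1))); split => //; split; [apply: Hy|apply: HG].
  rewrite /Qp /= all_cat => /andP [E1 E2] /andP [H1 H2].
  by rewrite lcode_cat; exists (lcode (sterm_leaves x)), (lcode (flatten (map sterm_leaves G0))); split => //; split; [apply: Hx|apply: IH].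
by move=> HQ; apply: HQ.
Qed.

Lemma sem_BP_red r0 Rs' a : sem rs (BP r0 Rs') a -> red rs a [::].
Proof.
elim: Rs' r0 a => [|r1 Rs IH] r0 a /=; first by case.
case=> a1 [a2 [[_ H1] [H2 Hr]]]; apply: red_trans Hr _.
by have := red_cat H1 (IH _ _ H2).
Qed.

Lemma seqsem_bangs Rs : (forall r, r \in Rs -> sem rs (mkU r) [::]) ->
  seqsem (sem rs) (map (fun r => Bang (mkU r)) Rs) [::].
Proof.
elim: Rs => //= r Rs IH Hv; exists [::], [::]; split => //; split.
  by split; [apply: Hv; rewrite in_cons eqxx|apply: red_refl].
by apply: IH => r' Hr'; apply: Hv; rewrite in_cons Hr' orbT.
Qed.

Lemma sem_H r0 Rs' q t : (forall r, r \in r0 :: Rs' -> sem rs (mkU r) [::]) -> q != 3 ->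
  sem rs (HF r0 Rs' q) t -> red rs ([:: 0] ++ q :: t ++ [:: 1]) [:: 2].
Proof.
move=> Hv Hq H.
have HP : sem rs (prodL (Bang (mkU r0)) (map (fun r => Bang (mkU r)) Rs' ++ [:: Var 0; slotD; Var q])) [:: 0; q].
  apply: sem_prodL_intro; exists [::], [:: 0; q]; split => //; split.
    by split; [apply: Hv; rewrite in_cons eqxx|apply: red_refl].
  apply/seqsem_cat; exists [::], [:: 0; q]; split => //; split.
    by apply: seqsem_bangs => r Hr; apply: Hv; rewrite in_cons Hr orbT.
  exists [:: 0], [:: q]; split => //; split; first exact: sem_var.
  exists [::], [:: q]; split => //; split; first by rewrite /= /Ecode /=; apply: red_refl.
  by exists [:: q], [::]; split => //; split => //; apply: sem_var.
have := H [:: 0; q] HP [:: 1] (sem_var rs (isT : 1 != 3)).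
case=> a [b [Ha [Hb Hr]]].
apply: red_trans Hr _.
have -> : [:: 2] = [::] ++ [:: 2] by [].
apply: red_cat; first exact: sem_BP_red Ha.
by move: Hb; rewrite /= /Ecode.
Qed.

End Leaves.



Lemma outs_ne r : rsl r || (ry r != [::]) -> outs r != [::].
Proof. by rewrite /outs; case: (ry r) => [|y ys] //=; case: (rsl r). Qed.

Section Main.
Variables (Q Gam : finType) (blank : Gam)
          (delta : Q -> Gam -> option (Q * Gam * bool)) (q0 qacc : Q)
          (Sigma : finType) (inp : Sigma -> Gam).

Local Notation Rs := (RsT blank delta qacc).
Local Notation Rs' := (RsT' blank delta qacc).
Local Notation rs := (rsT blank delta qacc).
Local Notation r0 := (finalR qacc).
Local Notation K := (KF r0 Rs').

Definition HT := HF r0 Rs' (qc q0).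
Definition lexT := [seq (a, Var (gc (inp a))) | a <- enum Sigma].
Definition gramT : grammar Sigma := Grammar lexT HT.

Definition c0 (w : seq Sigma) : tm_config Q Gam := (q0, [::], map inp w).
Definition fw (w : seq Sigma) := map (fun a => Var (gc (inp a))) w.

Lemma valid_all r : r \in r0 :: Rs' -> sem rs (mkU r) [::].
Proof.
move=> Hin; apply: sem_mkU.
have /andP [H1 H2] := RsT_ok Hin.
split => //; first exact: outs_ne.
by apply: map_f.
Qed.

Lemma assigns_fw w As : assigns gramT w As -> As = fw w.
Proof.
rewrite /assigns; elim: w As => [|a w IH] [|A As] //= [Hs]; try by case: Hs.
move=> /andP [Hin Hall].
case/mapP: Hin => a' _ [Ea EA]; subst a' A.
by rewrite (IH As) //; split => //; case: Hs.
Qed.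

Lemma assigns_intro w : assigns gramT w (fw w).
Proof.
rewrite /assigns; split; first by rewrite size_map.
elim: w => //= a w IH; rewrite IH andbT.
by apply/mapP; exists a; rewrite ?mem_enum.
Qed.

Lemma all_isV w : all isV (fw w).
Proof. by elim: w => //= a w ->; rewrite andbT. Qed.

Lemma lcode_fw w : lcode (fw w) = map (@gc Gam) (map inp w).
Proof. by elim: w => //= a w IH; rewrite -IH. Qed.

Lemma sem_accept w : sem rs HT (lcode (fw w)) -> accepted blank delta qacc (c0 w).
Proof.
move=> H.
have Hr := sem_H (@valid_all) (qc_ne3 q0) H.
apply: (@red_accept _ _ _ _ _ _ [:: 2]) => //.
by move: Hr; rewrite lcode_fw.
Qed.

Lemma sF w : s_rec_F gramT w -> accepted blank delta qacc (c0 w).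
Proof.
case=> As [/assigns_fw -> HD].
apply: sem_accept; apply: (Fsound HD).
have := fseq_leaves rs (G := map FF (fw w)).
have -> : fmeta_leaves (map FF (fw w)) = fw w.
  by rewrite /fmeta_leaves; elim: (fw w) => //= A l ->.
by apply; apply: all_isV.
Qed.

Lemma tF w : t_rec_F gramT w -> accepted blank delta qacc (c0 w).
Proof.
case=> As [Pi [/assigns_fw -> [HL HD]]].
apply: sem_accept; apply: (Fsound HD).
have := fseq_leaves rs (G := Pi).
by rewrite HL; apply; apply: all_isV.
Qed.

Lemma sM w : s_rec_M gramT w -> accepted blank delta qacc (c0 w).
Proof.
case=> As [/assigns_fw -> HD].
apply: sem_accept; apply: (Msound HD).
split; first exact: stoupok0.
have := sseq_leaves rs (G := map SF (fw w)).
have -> : flatten (map sterm_leaves (map SF (fw w))) = fw w.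
  by elim: (fw w) => //= A l ->.
apply; last exact: all_isV.
by elim: (fw w).
Qed.

Lemma tM w : t_rec_M gramT w -> accepted blank delta qacc (c0 w).
Proof.
case=> As [Pi [/assigns_fw -> [HE [HL HD]]]].
apply: sem_accept; apply: (Msound HD).
case/andP: HE => /eqP E1 E2.
split; first by rewrite E1; exact: stoupok0.
have := sseq_leaves rs (G := Pi.2).
have E : flatten (map sterm_leaves Pi.2) = fw w by exact: HL.
by rewrite E; apply => //; apply: all_isV.
Qed.

Lemma map_FF_fw w : map FF (fw w) = map FFV (map (@gc Gam) (map inp w)).
Proof. by elim: w => //= a w ->. Qed.
Lemma map_SF_fw w : map SF (fw w) = map SFV (map (@gc Gam) (map inp w)).
Proof. by elim: w => //= a w ->. Qed.

Lemma fF w : w <> [::] -> accepted blank delta qacc (c0 w) -> Fder (map FF (fw w)) HT.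
Proof.
move=> Hw [n [l [r Hn]]].
pose D := fun L R => Fder (bangsF Rs ++ map FFV L ++ slotF :: map FFV R) K.
pose D0 := fun T => Fder (bangsF Rs ++ map FFV T) K.
have Dstep : forall r P S, r \in Rs -> rsl r -> D (P ++ ry r) (rz r ++ S) -> D (P ++ rx r) (rw r ++ S).
  move=> r1 P S Hin Hsl; rewrite /D => H.
  have Hne : outs r1 != [::] by apply: outs_ne; rewrite Hsl.
  have := @F_step Rs r1 (map FFV P) (map FFV S) K Hin Hne.
  rewrite !map_cat -!catA /=; apply.
  by move: H; rewrite /outF Hsl !map_cat -!catA.
have Dfin : forall P S, D0 (P ++ ry r0 ++ rz r0 ++ S) -> D (P ++ rx r0) (rw r0 ++ S).
  move=> P S; rewrite /D /D0 => H.
  have := @F_step Rs r0 (map FFV P) (map FFV S) K (finalR_in blank delta qacc) isT.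
  rewrite !map_cat -!catA /=; apply.
  by move: H; rewrite !map_cat /=.
have D0s : D0 [:: 2] by exact: F_final.
have := @fwd Q Gam blank delta qacc D D0 Dstep Dfin D0s n (c0 w) l r Hn.
rewrite /D /= => H.
apply: F_init; first by clear -Hw; move: Hw; case: w.
rewrite map_FF_fw; move: H; by rewrite map_cat.
Qed.

Lemma fM w : w <> [::] -> accepted blank delta qacc (c0 w) -> Mder (mset0, map SF (fw w)) HT.
Proof.
move=> Hw [n [l [r Hn]]].
pose D := fun L R => Mder (zeta Rs, map SFV L ++ slotM :: map SFV R) K.
pose D0 := fun T => Mder (zeta Rs, map SFV T) K.
have Dstep : forall r P S, r \in Rs -> rsl r -> D (P ++ ry r) (rz r ++ S) -> D (P ++ rx r) (rw r ++ S).
  move=> r1 P S Hin Hsl; rewrite /D => H.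
  have Hne : outs r1 != [::] by apply: outs_ne; rewrite Hsl.
  have := @M_step Rs r1 (map SFV P) (map SFV S) K Hin Hne.
  rewrite !map_cat -!catA /=; apply.
  by move: H; rewrite /outM Hsl !map_cat -!catA.
have Dfin : forall P S, D0 (P ++ ry r0 ++ rz r0 ++ S) -> D (P ++ rx r0) (rw r0 ++ S).
  move=> P S; rewrite /D /D0 => H.
  have := @M_step Rs r0 (map SFV P) (map SFV S) K (finalR_in blank delta qacc) isT.
  rewrite !map_cat -!catA /=; apply.
  by move: H; rewrite !map_cat /=.
have D0s : D0 [:: 2] by exact: M_final.
have := @fwd Q Gam blank delta qacc D D0 Dstep Dfin D0s n (c0 w) l r Hn.
rewrite /D /= => H.
apply: M_init; first by clear -Hw; move: Hw; case: w.
rewrite map_SF_fw; move: H; by rewrite map_cat.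
Qed.

End Main.

Local Close Scope mset_scope.

Theorem theorem12 (Sigma : finType) (M : seq Sigma -> Prop) :
  recursively_enumerable M -> ~ M [::] ->
  (exists G : grammar Sigma,
     (forall w, s_rec_M G w <-> M w) /\ (forall w, t_rec_M G w <-> M w)) /\
  (exists G : grammar Sigma,
     (forall w, s_rec_F G w <-> M w) /\ (forall w, t_rec_F G w <-> M w)).
Proof.
case=> Q [Gam [blank [inp [delta [q0 [qacc [_ [_ HM]]]]]]]] Hne.
have accM : forall w, accepted blank delta qacc (c0 q0 inp w) <-> M w.
  by move=> w; rewrite HM.
have ne : forall w, M w -> w <> [::] by move=> w Hw Ew; rewrite Ew in Hw.
have Hsl : forall As : seq formula, flatten (map sterm_leaves (map SF As)) = As.
  by elim=> //= A As ->.
have Hfl : forall As : seq formula, fmeta_leaves (map FF As) = As.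
  by rewrite /fmeta_leaves; elim=> //= A As ->.
have Hse : forall As : seq formula, smeta_empty (multiset.mset0, map SF As).
  by move=> As; rewrite /smeta_empty eqxx /=; elim: As.
split; exists (gramT blank delta q0 qacc inp); split => w; split.
- by move/sM/accM.
- move=> Hw; exists (fw inp w); split; first exact: assigns_intro.
  by apply: fM; [exact: ne|apply/accM].
- by move/tM/accM.
- move=> Hw; exists (fw inp w), (multiset.mset0, map SF (fw inp w)); split; first exact: assigns_intro.
  split; first exact: Hse.
  split; first exact: Hsl.
  by apply: fM; [exact: ne|apply/accM].
- by move/sF/accM.
- move=> Hw; exists (fw inp w); split; first exact: assigns_intro.
  by apply: fF; [exact: ne|apply/accM].
- by move/tF/accM.
- move=> Hw; exists (fw inp w), (map FF (fw inp w)); split; first exact: assigns_intro.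
  split; first exact: Hfl.
  by apply: fF; [exact: ne|apply/accM].
Qed.
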